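(* Let $\psi:\mathbb R^n\to\mathbb R$ be convex with $\psi(0)=0$ and $0\in\partial\psi(0)$. Let $t>0$, $S:=S(0,0,t)=\{x:\psi(x)\le t\}$, and $y\in S$. Then $$\partial\psi^*\Big(\tfrac12\big(t-\psi(y)\big)(S-y)^\circ\Big)\subset S.$$
   Context: $\psi^*$ is the Legendre transform, $\partial\psi^*(Z)=\bigcup_{z\in Z}\partial\psi^*(z)$. For a convex set $E$ containing $0$, $E^\circ=\{z: z\cdot x\le1\ \forall x\in E\}$ is its polar body and $aE^\circ=\{az:z\in E^\circ\}$. *)

(* Defs.v *)
From mathcomp Require Import all_boot all_order all_algebra.
From mathcomp Require Import all_classical all_reals.
From mathcomp Require Import ereal.
Set Implicit Arguments. Unset Strict Implicit. Unset Printing Implicit Defensive.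
Import Order.TTheory GRing.Theory Num.Theory.
Local Open Scope classical_set_scope.
Local Open Scope ring_scope.

Section Defs.
Variables (R : realType) (n : nat).
Implicit Types (x y z w : 'rV[R]_n) (f : 'rV[R]_n -> R).

Definition dotv x y : R := \sum_(i < n) x ord0 i * y ord0 i.

Definition convex_fun f : Prop :=
  forall x y (l : R), 0 <= l <= 1 ->
    f ((1 - l) *: x + l *: y) <= (1 - l) * f x + l * f y.

Definition subdiff f x : set 'rV[R]_n :=
  [set g | forall w, f x + dotv g (w - x) <= f w].

Definition legendre f : 'rV[R]_n -> \bar R :=
  fun z => ereal_sup [set (dotv x z - f x)%:E | x in [set: 'rV[R]_n]].

Definition esubdiff (F : 'rV[R]_n -> \bar R) z : set 'rV[R]_n :=
  [set g | F z \is a fin_num /\ forall w, (F z + (dotv g (w - z))%:E <= F w)%E].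

Definition subdiff_img (F : 'rV[R]_n -> \bar R) (Z : set 'rV[R]_n) : set 'rV[R]_n :=
  \bigcup_(z in Z) esubdiff F z.

Definition sublevel f (t : R) : set 'rV[R]_n := [set x | f x <= t].

Definition polar (E : set 'rV[R]_n) : set 'rV[R]_n :=
  [set z | forall x, E x -> dotv z x <= 1].

Definition scale_set (a : R) (E : set 'rV[R]_n) : set 'rV[R]_n :=
  [set a *: z | z in E].

Definition translate (E : set 'rV[R]_n) y : set 'rV[R]_n :=
  [set x - y | x in E].
End Defs.

(* Main.v *)
Require Import Defs.
From mathcomp Require Import all_boot all_order all_algebra.
From mathcomp Require Import all_classical all_reals.
From mathcomp Require Import ereal.
From mathcomp Require Import ring lra.
Import Order.TTheory GRing.Theory Num.Theory.
Local Open Scope classical_set_scope.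
Local Open Scope ring_scope.

Section Aux.
Variables (R : realType) (n : nat).
Implicit Types (x y z w : 'rV[R]_n).

Lemma dotvC x y : dotv x y = dotv y x.
Proof. by apply: eq_bigr => i _; rewrite mulrC. Qed.

Lemma dotvDl x y z : dotv (x + y) z = dotv x z + dotv y z.
Proof. by rewrite /dotv -big_split; apply: eq_bigr => i _; rewrite mxE mulrDl. Qed.

Lemma dotvZl a x z : dotv (a *: x) z = a * dotv x z.
Proof. by rewrite /dotv mulr_sumr; apply: eq_bigr => i _; rewrite mxE mulrA. Qed.

Lemma dotvNl x z : dotv (- x) z = - dotv x z.
Proof. by rewrite -scaleN1r dotvZl mulN1r. Qed.

Lemma dotvBl x y z : dotv (x - y) z = dotv x z - dotv y z.
Proof. by rewrite dotvDl dotvNl. Qed.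

Lemma dotvDr x y z : dotv z (x + y) = dotv z x + dotv z y.
Proof. by rewrite !(dotvC z) dotvDl. Qed.

Lemma dotvZr a x z : dotv z (a *: x) = a * dotv z x.
Proof. by rewrite !(dotvC z) dotvZl. Qed.

Lemma dotvBr x y z : dotv z (x - y) = dotv z x - dotv z y.
Proof. by rewrite !(dotvC z) dotvBl. Qed.

Lemma dotv0r x : dotv x 0 = 0.
Proof. by rewrite /dotv big1 // => i _; rewrite mxE mulr0. Qed.

Lemma dotv_delta x (k : 'I_n) : dotv x (delta_mx 0 k) = x 0 k.
Proof.
rewrite /dotv (bigD1 k) //= big1 => [|i ik]; rewrite mxE.
  by rewrite !eqxx mulr1 addr0.
by rewrite (negbTE ik) andbF mulr0.
Qed.
End Aux.
Arguments dotvC {R n}. Arguments dotvDl {R n}. Arguments dotvZl {R n}.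
Arguments dotvNl {R n}. Arguments dotvBl {R n}. Arguments dotvDr {R n}.
Arguments dotvZr {R n}. Arguments dotvBr {R n}. Arguments dotv0r {R n}.
Arguments dotv_delta {R n}.
Section Sg.
Variables (R : realType) (n : nat) (psi : 'rV[R]_n -> R).
Hypothesis cvx : convex_fun psi.
Variable x : 'rV[R]_n.

Definition Vk (k : nat) (d : 'rV[R]_n) := forall i : 'I_n, (k <= i)%N -> d 0 i = 0.

Lemma key (k : nat) (g : 'rV[R]_n) (e : 'rV[R]_n)
  (IH : forall d, Vk k d -> psi x + dotv g d <= psi (x + d))
  d d' r s : Vk k d -> Vk k d' -> 0 < r -> 0 < s ->
  (psi x + dotv g d' - psi (x + d' - r *: e)) / r <=
  (psi (x + d + s *: e) - psi x - dotv g d) / s.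
Proof.
move=> hd hd' r0 s0.
have rs0 : 0 < r + s by lra.
set l := r / (r + s).
have l01 : 0 <= l <= 1.
  apply/andP; split; first by rewrite /l divr_ge0 // ltW.
  by rewrite /l ler_pdivrMr // mul1r; lra.
set m := (1 - l) *: d' + l *: d.
have hm : Vk k m by move=> i ki; rewrite !mxE hd // hd' // !mulr0 addr0.
have e1 : (1 - l) *: (x + d' - r *: e) + l *: (x + d + s *: e) = x + m.
  apply/rowP => i; rewrite !mxE /l; field; lra.
have c1 := cvx (x + d' - r *: e) (x + d + s *: e) l l01.
rewrite e1 in c1.
have c2 := IH m hm.
rewrite /m dotvDr !dotvZr in c2.
set A := psi x + dotv g d' - psi (x + d' - r *: e).
set B := psi (x + d + s *: e) - psi x - dotv g d.
have h1 : (1 - l) * A <= l * B by rewrite /A /B; lra.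
have hl1 : 1 - l = s / (r + s) by rewrite /l; field; lra.
rewrite hl1 /l in h1.
have h2 : s * A <= r * B.
  have := h1; rewrite -!mulrA (mulrC _^-1) (mulrC _^-1) !mulrA.
  by rewrite ler_pM2r ?invr_gt0.
rewrite ler_pdivrMr // mulrAC ler_pdivlMr //.
by rewrite mulrC (mulrC B).
Qed.

Lemma step (k : nat) (kn : (k < n)%N) :
  (exists g, forall d, Vk k d -> psi x + dotv g d <= psi (x + d)) ->
  (exists g, forall d, Vk k.+1 d -> psi x + dotv g d <= psi (x + d)).
Proof.
move=> [g IH].
pose kk : 'I_n := Ordinal kn.
pose e : 'rV[R]_n := delta_mx 0 kk.
pose L := [set l : R | exists d' r, [/\ Vk k d', 0 < r &
   l = (psi x + dotv g d' - psi (x + d' - r *: e)) / r]].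
have V0 : Vk k 0 by move=> i _; rewrite mxE.
have L0 : L !=set0.
  by exists ((psi x + dotv g 0 - psi (x + 0 - 1 *: e)) / 1); exists 0, 1.
have Lub : forall d s, Vk k d -> 0 < s ->
    ubound L ((psi (x + d + s *: e) - psi x - dotv g d) / s).
  move=> d s hd s0 l [d' [r [hd' r0 ->]]].
  exact: (@key k g e IH d d' r s hd hd' r0 s0).
have hs : has_sup L.
  split => //; exists ((psi (x + 0 + 1 *: e) - psi x - dotv g 0) / 1).
  exact: Lub.
pose c := sup L.
exists (g + (c - g 0 kk) *: e) => d hd.
pose s := d 0 kk.
pose d0 := d - s *: e.
have hd0 : Vk k d0.
  move=> i ki; rewrite !mxE.
  have [ik|ik] := eqVneq i kk.
    by rewrite ik /s !eqxx mulr1 subrr.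
  rewrite hd; last first.
    rewrite ltn_neqAle ki andbT; apply/negP => /eqP H.
    by move: ik; rewrite /kk; apply/negP; rewrite negbK; apply/eqP/val_inj.
  by rewrite andbF mulr0 subrr.
have dd : d = d0 + s *: e by rewrite /d0 subrK.
have dot1 : dotv (g + (c - g 0 kk) *: e) d = dotv g d0 + c * s.
  rewrite dotvDl dotvZl (dotvC e d) dotv_delta -/s.
  rewrite /d0 dotvBr dotvZr dotv_delta.
  ring.
rewrite dot1 dd (addrA x).
have [s0|s0|s0] := ltgtP s 0.
- pose r := - s.
  have r0 : 0 < r by rewrite /r oppr_gt0.
  have hin : L ((psi x + dotv g d0 - psi (x + d0 - r *: e)) / r).
    by exists d0, r.
  have := sup_upper_bound hs hin.
  rewrite -/c ler_pdivrMr // /r scaleNr opprK.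
  lra.
- have := Lub d0 s hd0 s0.
  move/(ge_sup L0); rewrite -/c ler_pdivlMr //.
  lra.
- rewrite s0 scale0r addr0 mulr0 addr0.
  exact: IH.
Qed.

Lemma subgrad_exists : exists g, forall u, psi x + dotv g (u - x) <= psi u.
Proof.
have : forall k, (k <= n)%N ->
    exists g, forall d, Vk k d -> psi x + dotv g d <= psi (x + d).
  elim => [_|k IHk kn].
    exists 0 => d hd.
    have -> : d = 0 by apply/rowP => i; rewrite (hd i) // mxE.
    by rewrite dotv0r !addr0.
  exact: (@step k kn (IHk (ltnW kn))).
move=> /(_ n (leqnn n)) [g Hg].
exists g => u.
have hV : Vk n (u - x).
  by move=> i hi; move: (ltn_ord i); rewrite ltnNge hi.
have := Hg (u - x) hV.
by rewrite (addrC x) subrK.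
Qed.
End Sg.
Theorem mainTheorem13 (R : realType) (n : nat) (psi : 'rV[R]_n -> R)
  (t : R) (y : 'rV[R]_n) :
  convex_fun psi -> psi 0 = 0 -> subdiff psi 0 0 -> 0 < t ->
  sublevel psi t y ->
  subdiff_img (legendre psi)
    (scale_set ((t - psi y) / 2) (polar (translate (sublevel psi t) y)))
  `<=` sublevel psi t.
Proof.
move=> cvx _ _ _ hy u [z [w hw <-] [hfin hsub]].
have [g hg] := @subgrad_exists _ _ psi cvx u.
move: hfin hsub; set a := (t - psi y) / 2 => hfin hsub.
have Fg : (legendre psi g <= (dotv u g - psi u)%:E)%E.
  apply: ge_ereal_sup => _ [v _ <-]; rewrite lee_fin.
  have := hg v; rewrite dotvBr (dotvC g v) (dotvC g u); lra.
have Fz : ((dotv y (a *: w) - psi y)%:E <= legendre psi (a *: w))%E.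
  by apply: ereal_sup_ubound; exists y.
have := hsub g.
move: Fz; rewrite -(fineK hfin).
set Fv := fine (legendre psi (a *: w)).
rewrite lee_fin => Fz.
rewrite -EFinD => /le_trans /(_ Fg); rewrite lee_fin => H1.
rewrite dotvBr in H1.
have H2 : psi u - psi y <= a * dotv w (u - y).
  rewrite dotvZr (dotvC u w) in H1; rewrite dotvZr (dotvC y w) in Fz.
  rewrite dotvBr mulrBr; lra.
rewrite /sublevel /=; clear hsub Fg hfin.
have [//|ht] := leP (psi u) t.
exfalso.
rewrite /sublevel /= in hy.
have a0 : 0 <= a by rewrite /a; lra.
set D := psi u - psi y in H2.
have D0 : 2 * a < D by rewrite /D /a; lra.
set th := 2 * a / D.
have Dp : 0 < D by lra.
have thD : th * D = 2 * a by rewrite /th; field; lra.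
have th0 : 0 <= th by rewrite /th divr_ge0 //; lra.
have th1 : th <= 1 by rewrite /th ler_pdivrMr //; lra.
have th01 : 0 <= th <= 1 by apply/andP.
have hs : psi ((1 - th) *: y + th *: u) <= t.
  apply: le_trans (cvx y u th th01) _.
  have : (1 - th) * psi y + th * psi u = psi y + th * D by rewrite /D; ring.
  move=> ->; rewrite thD /a; lra.
have hp : dotv w (th *: (u - y)) <= 1.
  apply: hw; exists ((1 - th) *: y + th *: u) => //.
  apply/rowP => i; rewrite !mxE; ring.
rewrite dotvZr in hp.
set p := dotv w (u - y) in H2 hp.
have : th * D <= th * (a * p) by rewrite ler_wpM2l.
have : a * (th * p) <= a * 1 by rewrite ler_wpM2l.
nra.
Qed.
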